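(* Let $d^{AD}_n$ denote the number of signed derangements $\sigma\in D_n$ with $\ell_D(\sigma)$ even. Then: (i) for $n\ge 2$, $d^{AD}_n=n!\sum_{k=0}^{n-2}\frac{2^{n-k-2}(-1)^k}{k!}+(-1)^{n-1}(n-1)$; (ii) for $n\ge 2$, $d^{AD}_n=2n\,d^{AD}_{n-1}+(-1)^{n-1}(n^2-2n-1)$, with $d^{AD}_1=0$; (iii) for $n\ge 3$, $d^{AD}_n=(2n-1)d^{AD}_{n-1}+2(n-1)d^{AD}_{n-2}+(-1)^{n-1}(2n-3)$, with $d^{AD}_1=0$, $d^{AD}_2=1$.
   Context: $B_n$ is the set of words $\sigma=\sigma_1\cdots\sigma_n$ with $\sigma_i\in\{\pm1,\dots,\pm n\}$ and $|\sigma_1|\cdots|\sigma_n|$ a permutation of $[n]$. $\mathrm{neg}(\sigma)=\#\{i:\sigma_i<0\}$. $D_n=\{\sigma\in B_n:\mathrm{neg}(\sigma)\text{ even}\}$. A derangement is an element with $\sigma_i\neq i$ for all $i$. $\mathrm{inv}(\sigma)=\#\{(i,j):i<j,\sigma_i>\sigma_j\}$ (usual integer order), $\ell_B(\sigma)=\mathrm{inv}(\sigma)-\sum_{i:\sigma_i<0}\sigma_i$, and $\ell_D(\sigma)=\ell_B(\sigma)-\mathrm{neg}(\sigma)$. *)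

(* Defs.v *)
From HB Require Import structures.
From mathcomp Require Import all_boot all_order all_algebra all_fingroup.
Set Implicit Arguments. Unset Strict Implicit. Unset Printing Implicit Defensive.
Import Order.TTheory GRing.Theory Num.Theory.
Local Open Scope ring_scope.

(* The word is
   sigma_(i+1) = (if s i then -1 else 1) * (p i + 1), for i : 'I_n. *)
Definition signed_perm (n : nat) : finType :=
  ({perm 'I_n} * {ffun 'I_n -> bool})%type.

Definition sval (n : nat) (s : signed_perm n) (i : 'I_n) : int :=
  if s.2 i then - ((s.1 i).+1%N)%:Z else ((s.1 i).+1%N)%:Z.

Definition negB (n : nat) (s : signed_perm n) : nat :=
  #|[set i : 'I_n | sval s i < 0]|.

Definition invB (n : nat) (s : signed_perm n) : nat :=
  #|[set ij : 'I_n * 'I_n | (ij.1 < ij.2)%N && (sval s ij.2 < sval s ij.1)]|.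

Definition lenB (n : nat) (s : signed_perm n) : int :=
  (invB s)%:Z - \sum_(i : 'I_n | sval s i < 0) sval s i.

Definition lenD (n : nat) (s : signed_perm n) : int :=
  lenB s - (negB s)%:Z.

Definition in_D (n : nat) (s : signed_perm n) : bool := ~~ odd (negB s).

Definition derangement (n : nat) (s : signed_perm n) : bool :=
  [forall i : 'I_n, sval s i != (i.+1%N)%:Z].

Definition dAD (n : nat) : nat :=
  #|[set s : signed_perm n | [&& in_D s, derangement s & (2 %| lenD s)%Z]]|.

(* Main.v *)
Require Import Defs.
From HB Require Import structures.
From mathcomp Require Import all_boot all_order all_algebra all_fingroup.
From mathcomp Require Import zify ring lra.
Set Implicit Arguments. Unset Strict Implicit. Unset Printing Implicit Defensive.
Import Order.TTheory GRing.Theory Num.Theory.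
Local Open Scope ring_scope.

Lemma sgn_card (R : pzRingType) (T:finType) (P : pred T) :
  (-1)^+ #|[set x | P x]| = \prod_x (-1)^+ (P x) :> R.
Proof.
rewrite -sum1_card big_mkcond /= prodrXr; congr (_ ^+ _).
by apply: eq_bigr => x _; rewrite inE; case: (P x).
Qed.
Lemma card_ltk n k : (k <= n)%N -> #|[set m : 'I_n | (m < k)%N]| = k.
Proof.
move=> kn.
have -> : [set m : 'I_n | (m < k)%N] = widen_ord kn @: [set: 'I_k].
  apply/setP => m; rewrite inE; apply/idP/imsetP => [mk|[j _ ->]]; last exact: (ltn_ord j).
  by exists (Ordinal mk) => //; apply: val_inj.
by rewrite card_imset ?cardsT ?card_ord //; by move=> a b /(congr1 val) /= h; apply: val_inj.
Qed.
Lemma card_lt n (p : 'S_n) i : #|[set l | (p l < p i)%N]| = p i.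
Proof.
transitivity #|p @^-1: [set m : 'I_n | (m < p i)%N]|.
  by apply: eq_card => l; rewrite !inE.
rewrite card_preimset ?card_ltk //; [exact: ltnW | exact: perm_inj].
Qed.
Lemma pt (a b : nat) (u v : bool): a != b ->
  (-1)^+ (((if v then - (b.+1)%:Z else (b.+1)%:Z) < (if u then -(a.+1)%:Z else (a.+1)%:Z))%R : bool)
  * ((-1)^+ (u && (b<a)%N) * (-1)^+(v && (a<b)%N)) = (-1)^+ (b<a)%N :> int.
Proof.
move=> ne.
have e1 : (-(b.+1)%:Z < -(a.+1)%:Z) = (a<b)%N by apply/idP/idP; lia.
have e2 : ((b.+1)%:Z < (a.+1)%:Z) = (b<a)%N by apply/idP/idP; lia.
by case: u; case: v => /=; rewrite ?e1 ?e2; case: ltngtP ne => //= _ _;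
  rewrite ?expr0 ?expr1 ?mulr1 ?mul1r ?mulrNN.
Qed.

Lemma prod_pairs n (F : 'I_n * 'I_n -> int) : (forall i, F (i,i) = 1) ->
  \prod_x F x = \prod_(x : 'I_n * 'I_n | (x.1 < x.2)%N) (F x * F (x.2, x.1)).
Proof.
move=> F1; rewrite big_split /= (bigID (fun x : 'I_n * 'I_n => (x.1 < x.2)%N)) /=; congr (_ * _).
rewrite (bigID (fun x : 'I_n * 'I_n => x.1 == x.2)) /= big1 ?mul1r; last first.
  by move=> [i j] /andP[_ /eqP /= ->].
have sw : injective (fun x : 'I_n * 'I_n => (x.2, x.1)) by move=> [a b] [c d] [-> ->].
rewrite (reindex_inj sw) /=; apply: eq_bigl => [[i j]] /=.
by rewrite -(inj_eq val_inj) /=; case: ltngtP.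
Qed.

Definition invP n (p : 'S_n) :=
  #|[set x : 'I_n * 'I_n | (x.1 < x.2)%N && (p x.2 < p x.1)%N]|.

Lemma P1 n (s : signed_perm n) :
  (-1)^+ (invB s + \sum_(i | s.2 i) s.1 i) = (-1)^+ (invP s.1) :> int.
Proof.
have hsum : (-1)^+ (\sum_(i | s.2 i) s.1 i) =
    \prod_(x : 'I_n * 'I_n) (-1)^+ (s.2 x.1 && (s.1 x.2 < s.1 x.1)%N) :> int.
  rewrite -prodrXr.
  rewrite -(pair_big xpredT xpredT (fun i l => (-1)^+ (s.2 i && (s.1 l < s.1 i)%N))) /=.
  rewrite big_mkcond; apply: eq_bigr => i _; case: (s.2 i) => /=.
    by rewrite -[in LHS](card_lt s.1 i) sgn_card.
  by rewrite big1.
rewrite exprD /invB /invP !sgn_card hsum -big_split /=.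
rewrite !prod_pairs; try by move=> i /=; rewrite !ltnn ?andbF.
apply: eq_bigr => [[i j]] /= ij.
have ji : (j < i)%N = false by rewrite ltnNge ltnW.
rewrite ij ji /= expr0 !mulr1.
have ne : s.1 i != s.1 j :> nat.
  rewrite (inj_eq val_inj) (inj_eq (@perm_inj _ s.1)).
  by apply: contraTneq ij => ->; rewrite ltnn.
rewrite /Defs.sval -mulrA mul1r; exact: (pt (s.2 i) (s.2 j) ne).
Qed.

Lemma vdm_perm n (p : 'S_n) :
  \prod_(x : 'I_n * 'I_n | (x.1 < x.2)%N) (((p x.2 : nat)%:R - (p x.1 : nat)%:R) : rat) =
  (-1)^+ p * \prod_(x : 'I_n * 'I_n | (x.1 < x.2)%N) (((x.2 : nat)%:R - (x.1 : nat)%:R) : rat).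
Proof.
pose a : 'rV[rat]_n := \row_j ((j : nat)%:R).
have hV : Vandermonde n (\row_j ((p j : nat)%:R)) = col_perm p (Vandermonde n a).
  by apply/matrixP => i j; rewrite !mxE.
have := congr1 determinant hV.
rewrite col_permE det_mulmx det_perm odd_permV !det_Vandermonde.
rewrite !(pair_big_dep (@predT 'I_n) (fun i j : 'I_n => (i < j)%N)) /=.
under eq_bigr do rewrite !mxE.
under [X in _ = X * _]eq_bigr do rewrite !mxE.
by move=> ->; rewrite mulrC.
Qed.

Lemma P2 n (p : 'S_n) : odd (invP p) = odd_perm p.
Proof.
set Q := \prod_(x : 'I_n * 'I_n | (x.1 < x.2)%N) (((x.2 : nat)%:R - (x.1 : nat)%:R) : rat).
have Qpos : 0 < Q by apply: prodr_gt0 => x /= h; rewrite subr_gt0 ltr_nat.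
have hG : \prod_(x : 'I_n * 'I_n | (x.1 < x.2)%N) (((p x.2 : nat)%:R - (p x.1 : nat)%:R) : rat)
   = (-1)^+ invP p * \prod_(x : 'I_n * 'I_n | (x.1 < x.2)%N) `|((p x.2 : nat)%:R - (p x.1 : nat)%:R) : rat|.
  rewrite /invP sgn_card [in RHS](bigID (fun x : 'I_n * 'I_n => (x.1 < x.2)%N)) /=.
  rewrite [X in _ * X * _]big1 ?mulr1; last by move=> x /negbTE ->.
  rewrite -big_split; apply: eq_bigr => x h; rewrite h /=.
  case: (ltngtP (p x.2) (p x.1)) => hp /=.
  - by rewrite ltr0_norm ?subr_lt0 ?ltr_nat // expr1 mulN1r opprK.
  - by rewrite ger0_norm ?subr_ge0 ?ler_nat ?(ltnW hp) // expr0 mul1r.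
  - by rewrite hp subrr normr0 mulr0.
have hN : \prod_(x : 'I_n * 'I_n | (x.1 < x.2)%N) `|((p x.2 : nat)%:R - (p x.1 : nat)%:R) : rat| = Q.
  rewrite -normr_prod vdm_perm normrM normr_sign mul1r.
  by rewrite gtr0_norm.
have := vdm_perm p; rewrite hG hN -/Q => /(mulIf (lt0r_neq0 Qpos)).
by rewrite -signr_odd => /signr_inj.
Qed.

Lemma svalN n (s : signed_perm n) i : (Defs.sval s i < 0) = s.2 i.
Proof. by rewrite /Defs.sval; case: (s.2 i); rewrite ?oppr_lt0 // ltNge. Qed.

Lemma lenD_eq n (s : signed_perm n) :
  lenD s = (invB s + \sum_(i | s.2 i) s.1 i)%N%:Z.
Proof.
rewrite /lenD /lenB /negB.
rewrite (eq_bigl (fun i => s.2 i)); last by move=> i; rewrite svalN.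
rewrite (eq_bigr (fun i => - ((s.1 i).+1)%N%:Z)); last first.
  by move=> i si; rewrite /Defs.sval si.
rewrite (eq_card (B := [set i | s.2 i])); last by move=> i; rewrite !inE svalN.
rewrite -sum1_card sumrN opprK PoszD !(big_morph Posz PoszD (erefl 0%:Z)) /=.
rewrite -addrA; congr (_ + _).
rewrite [X in _ - X](eq_bigl (fun i => s.2 i)); last by move=> i; rewrite inE.
rewrite -sumrB; apply: eq_bigr => i _; rewrite -addn1 PoszD; ring.
Qed.

Lemma lenD_par n (s : signed_perm n) : (2 %| lenD s)%Z = ~~ odd_perm s.1.
Proof.
rewrite lenD_eq; rewrite /dvdz unfold_in /= dvdn2 -P2; congr (~~ _).
apply: (@signr_inj int); rewrite !signr_odd; exact: P1.
Qed.
Lemma sign_sum n (A : {set 'I_n}) :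
  \sum_(p : 'S_n | perm_on A p) (-1)^+ p = (#|A| <= 1)%N%:R :> rat.
Proof.
case: (leqP #|A| 1) => hA.
  rewrite (eq_bigl (fun p => p == 1%g)).
    by rewrite big_pred1_eq odd_perm1.
  move=> p; apply/idP/eqP => [pA | ->]; last exact: perm_on1.
  apply/permP => i; rewrite perm1; apply/eqP/negPn/negP => pi.
  have iA : i \in A by apply: (subsetP pA); exact: pi.
  have piA : p i \in A.
    apply: (subsetP pA); rewrite inE; apply: contra pi => /eqP h.
    by apply/eqP; apply: (@perm_inj _ p).
  have sub : [set i; p i] \subset A.
    by apply/subsetP => z; rewrite !inE => /orP[] /eqP ->.
  have := subset_leq_card sub; rewrite cards2 eq_sym pi /=.
  by move=> h; move: hA; rewrite leqNgt; case/negP.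
case/card_gt1P: hA => x [y [xA yA xy]].
set S := \sum_(p : 'S_n | perm_on A p) (-1)^+ p.
have tA : perm_on A (tperm x y).
  apply: subset_trans (tperm_on x y) _; apply/subsetP => z; rewrite !inE.
  by case/orP => /eqP ->.
have hS : S = - S.
  rewrite {1}/S (reindex_inj (mulgI (tperm x y))) /=.
  rewrite -sumrN; apply: eq_big => p.
    apply/idP/idP => h; last exact: perm_onM tA h.
    by rewrite -(mul1g p) -(tperm2 x y) -mulgA; apply: perm_onM tA h.
  by move=> _; rewrite odd_mul_tperm xy /= signrN.
have : S + S = 0 by rewrite {2}hS subrr.
by move=> h; rewrite (_ : false%:R = 0) //; lra.
Qed.


Lemma card_sumR (T : finType) (P : pred T) :
  (#|[set x | P x]|)%:R = \sum_x (P x)%:R :> rat.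
Proof.
rewrite -sum1_card natr_sum big_mkcond /=; apply: eq_bigr => x _.
by rewrite inE; case: (P x).
Qed.

Lemma forall_prod (T : finType) (P : pred T) :
  ([forall i, P i])%:R = \prod_i (P i)%:R :> rat.
Proof.
case: (boolP [forall i, P i]) => [/forallP h | /forallPn [i /negbTE hi]].
  by rewrite big1 // => i _; rewrite h.
by rewrite (bigD1 i) //= hi mul0r.
Qed.

Lemma ind4 (a : nat) (B b : bool) :
  ([&& ~~ odd a, B & ~~ b])%:R * 4 = (1 + (-1)^+a) * (1 + (-1)^+b) * B%:R :> rat.
Proof.
by rewrite -signr_odd; case: (odd a); case: B; case: b => /=; rewrite ?expr0 ?expr1; ring.
Qed.

Lemma der_eq n (s : signed_perm n) i :
  (Defs.sval s i != (i.+1)%N%:Z) = s.2 i || (s.1 i != i).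
Proof.
rewrite /Defs.sval; case: (s.2 i) => /=.
  by apply/negP => /eqP; lia.
by rewrite eqz_nat eqSS.
Qed.

Lemma dAD_eq n : dAD n = #|[set s : signed_perm n |
   [&& ~~ odd #|[set i | s.2 i]|, [forall i, s.2 i || (s.1 i != i)] & ~~ odd_perm s.1]]|.
Proof.
rewrite /dAD; apply: eq_card => s; rewrite !inE lenD_par /in_D /negB /derangement.
congr [&& ~~ odd _, _ & _].
  by apply: eq_card => i; rewrite !inE svalN.
by apply: eq_forallb => i; rewrite der_eq.
Qed.

Lemma fsum n (p : 'S_n) :
  \sum_(f : {ffun 'I_n -> bool}) (1 + (-1)^+ #|[set i | f i]|) * ([forall i, f i || (p i != i)])%:R
  = \prod_i (1 + (p i != i)%:R) + \prod_i ((p i != i)%:R - 1) :> rat.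
Proof.
rewrite (eq_bigr (fun f : {ffun 'I_n -> bool} => \prod_i ((f i || (p i != i))%:R : rat)
   + \prod_i ((-1)^+ (f i) * (f i || (p i != i))%:R))); last first.
  by move=> f _; rewrite forall_prod mulrDl mul1r sgn_card -big_split.
rewrite big_split /=.
rewrite [X in _ = X + _](eq_bigr (fun i => \sum_(b : bool) ((b || (p i != i))%:R : rat))); last first.
  by move=> i _; rewrite big_bool /=; case: (p i != i).
rewrite [X in _ = _ + X](eq_bigr (fun i => \sum_(b : bool) ((-1)^+ b * (b || (p i != i))%:R : rat))); last first.
  by move=> i _; rewrite big_bool /=; case: (p i != i) => /=; rewrite ?expr0 ?expr1; ring.
by rewrite !bigA_distr_bigA.
Qed.

Lemma prodm1 n (p : 'S_n) :
  \prod_i ((p i != i)%:R - 1) = (p == 1%g)%:R * (-1)^+n :> rat.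
Proof.
case: eqP => [-> | /eqP np].
  rewrite mul1r (eq_bigr (fun _ => -1)); last by move=> i _; rewrite perm1 eqxx /= sub0r.
  by rewrite prodr_const card_ord.
have [i hi] : exists i, p i != i.
  apply/existsP; apply: contraR np => /existsPn h.
  by apply/eqP/permP => i; rewrite perm1; move: (h i); rewrite negbK => /eqP.
by rewrite (bigD1 i) //= hi subrr !mul0r.
Qed.

Lemma permon_prod n (p : 'S_n) (J : {set 'I_n}) :
  \prod_(i in J) ((p i == i)%:R : rat) = (perm_on (~: J) p)%:R.
Proof.
case: (boolP (perm_on (~: J) p)) => h.
  apply: big1 => i iJ; suff -> : p i == i by [].
  apply/negPn/negP => pi.
  by have := subsetP h i pi; rewrite inE iJ.
case/subsetPn: h => i pi niJ.
have iJ : i \in J by move: niJ; rewrite inE negbK.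
by rewrite (bigD1 i) //= (negbTE pi) mul0r.
Qed.

Lemma prod_expand n (p : 'S_n) :
  \prod_i (1 + (p i != i)%:R) =
  \sum_(J : {set 'I_n}) (-1)^+#|J| * 2^+(n - #|J|) * (perm_on (~:J) p)%:R :> rat.
Proof.
rewrite (eq_bigr (fun i => (- (p i == i)%:R) + 2)); last first.
  by move=> i _; case: (p i == i) => /=; ring.
rewrite bigA_distr; apply: eq_bigr => J _.
rewrite (bigID (mem J)) /=.
rewrite (eq_bigr (fun i => - ((p i == i)%:R : rat))); last by move=> i ->.
rewrite prodrN permon_prod.
rewrite (eq_bigr (fun _ => 2)); last by move=> i /negbTE ->.
rewrite prodr_const.
have -> : #|(fun i : 'I_n => i \notin J)| = (n - #|J|)%N.
  suff : (#|J| + #|(fun i : 'I_n => i \notin J)| = n)%N by lia.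
  by rewrite -[RHS](card_ord n) -(cardC (mem J)).
by rewrite mulrAC.
Qed.

Lemma sum_sets n (H : nat -> rat) :
  \sum_(J : {set 'I_n}) H #|J| = \sum_(k < n.+1) 'C(n,k)%:R * H k.
Proof.
have le (J : {set 'I_n}) : (#|J| < n.+1)%N.
  by rewrite ltnS; apply: leq_trans (max_card _) _; rewrite card_ord.
rewrite (@partition_big _ _ _ _ _ _ xpredT (fun J : {set 'I_n} => inord #|J| : 'I_n.+1) xpredT) //=.
apply: eq_bigr => k _.
rewrite (eq_bigr (fun _ => H k)); last first.
  by move=> J /eqP <-; rewrite inordK.
rewrite sumr_const -[LHS]mulr_natl; congr (_%:R * _).
transitivity #|[set J : {set 'I_n} | #|J| == k]|; last by rewrite card_draws card_ord.
by apply: eq_card => J; rewrite unfold_in /= inordK // inE.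
Qed.

Lemma permsum n (A : {set 'I_n}) :
  \sum_(p : 'S_n) (perm_on A p)%:R * (1 + (-1)^+ p) = ((#|A|)`!)%:R + (#|A| <= 1)%N%:R :> rat.
Proof.
rewrite -card_perm -sign_sum -sum1_card natr_sum -big_split /= [RHS]big_mkcond /=.
rewrite [in RHS]big_mkcond /=; apply: eq_bigr => p _.
by rewrite unfold_in /perm_on; case: ([pred x | p x != x] \subset A) => /=;
  rewrite ?mul1r ?mul0r.
Qed.

Lemma cardCJ n (J : {set 'I_n}) : #|~: J| = (n - #|J|)%N.
Proof.
suff : (#|J| + #|~: J| = n)%N by lia.
by rewrite -[RHS](card_ord n) cardsC.
Qed.

Lemma sum_ind1 n (X : 'S_n -> rat) : \sum_(p : 'S_n) (p == 1%g)%:R * X p = X 1%g.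
Proof.
rewrite (bigD1 1%g) //= eqxx mul1r big1 ?addr0 //.
by move=> p /negbTE ->; rewrite mul0r.
Qed.



Lemma master n : (dAD n)%:R * 4 =
  \sum_(k < n.+1) 'C(n,k)%:R * ((-1)^+k * 2^+(n-k) * (((n-k)`!)%:R + ((n-k) <= 1)%N%:R))
  + 2 * (-1)^+n :> rat.
Proof.
rewrite dAD_eq card_sumR mulr_suml.
rewrite (eq_bigr (fun x : signed_perm n => (1 + (-1) ^+ #|[set i | x.2 i]|) * (1 + (-1) ^+ odd_perm x.1) *
     ([forall i, x.2 i || (x.1 i != i)])%:R)); last by move=> x _; rewrite ind4.
transitivity (\sum_(p : 'S_n) \sum_(f : {ffun 'I_n -> bool})
  (1 + (-1) ^+ #|[set i | f i]|) * (1 + (-1) ^+ odd_perm p) *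
     ([forall i, f i || (p i != i)])%:R : rat).
  by rewrite pair_big.
rewrite (eq_bigr (fun p : 'S_n => (\prod_i (1 + (p i != i)%:R) + \prod_i ((p i != i)%:R - 1)) * (1 + (-1)^+ p))); last first.
  by move=> p _; rewrite -fsum mulr_suml; apply: eq_bigr => f _; rewrite mulrAC.
rewrite (eq_bigr (fun p : 'S_n => (\sum_(J : {set 'I_n}) ((-1)^+#|J| * 2^+(n - #|J|)) * ((perm_on (~:J) p)%:R * (1 + (-1)^+ p)))
   + (p == 1%g)%:R * ((-1)^+n * (1 + (-1)^+ p)))); last first.
  move=> p _; rewrite prodm1 prod_expand mulrDl mulr_suml -mulrA; congr (_ + _).
  by apply: eq_bigr => J _; rewrite mulrA.
rewrite big_split /= sum_ind1 odd_perm1 /= expr0.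
rewrite exchange_big /=.
rewrite (eq_bigr (fun J : {set 'I_n} => (-1)^+#|J| * 2^+(n - #|J|) * (((n - #|J|)`!)%:R + ((n - #|J|) <= 1)%N%:R))); last first.
  by move=> J _; rewrite -mulr_sumr permsum cardCJ.
rewrite (@sum_sets n (fun k => (-1)^+k * 2^+(n - k) * (((n - k)`!)%:R + ((n - k) <= 1)%N%:R))).
by rewrite mulrC.
Qed.


Lemma binfR n k : (k <= n)%N ->
  ('C(n,k))%:R * ((n - k)`!)%:R = (n`!)%:R / (k`!)%:R :> rat.
Proof.
move=> kn; have k0 : (k`!)%:R != 0 :> rat by rewrite pnatr_eq0 -lt0n fact_gt0.
apply: (mulIf k0); rewrite mulfVK // -!natrM; congr (_%:R).
by rewrite -(bin_fact kn) mulnA mulnAC.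
Qed.

Lemma part1 m : (dAD m.+2)%:R = (m.+2`!)%:R *
   (\sum_(0 <= k < m.+1) (2 ^ (m.+2 - k - 2))%:R * (-1) ^+ k / (k`!)%:R)
   + (-1) ^+ m.+1 * (m.+1)%:R :> rat.
Proof.
apply: (mulIf (_ : (4:rat) != 0)) => //; rewrite master.
rewrite big_ord_recr big_ord_recr /= subnn !subSnn binn binSn.
rewrite big_mkord.
have hs : \sum_(i < m.+1) ('C(m.+2, i))%:R *
     ((-1) ^+ i * 2 ^+ (m.+2 - i) * (((m.+2 - i)`!)%:R + (m.+2 - i <= 1)%N%:R)) =
   (m.+2`!)%:R * (\sum_(i < m.+1) (2 ^ (m.+2 - i - 2))%:R * (-1) ^+ i / (i`!)%:R) * 4 :> rat.
  rewrite mulr_sumr mulr_suml; apply: eq_bigr => i _.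
  have im : (i <= m)%N by rewrite -ltnS.
  rewrite (_ : (m.+2 - i <= 1)%N = false); last by lia.
  rewrite addr0.
  transitivity (('C(m.+2,i))%:R * ((m.+2 - i)`!)%:R * ((-1)^+i * 2^+(m.+2-i)) : rat).
    by ring.
  rewrite binfR; last by lia.
  have -> : (m.+2 - i = (m.+2 - i - 2).+2)%N by lia.
  rewrite natrX !exprS; have -> : ((m.+2 - i - 2).+2 - 2 = m.+2 - i - 2)%N by lia.
  by ring.
rewrite hs.
have -> : (m.+2)%:R = (m%:R + 2 : rat) by rewrite -addn2 natrD.
have -> : (m.+1)%:R = (m%:R + 1 : rat) by rewrite -addn1 natrD.
rewrite !exprS /= expr0 (_ : 1`! = 1%N) // fact0.
ring.
Qed.

Lemma dAD1 : dAD 1 = 0%N.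
Proof.
have := master 1; rewrite !big_ord_recr big_ord0 /= expr0 (_ : 1`! = 1%N) // fact0.
rewrite bin0 binn /=.
move=> h; apply/eqP; rewrite -(eqr_nat rat) -(inj_eq (mulIf (_ : (4:rat) != 0))) //.
rewrite h mul0r; apply/eqP; rewrite subn0 subnn expr0 expr1; ring.
Qed.

Lemma dAD2 : dAD 2 = 1%N.
Proof.
apply/eqP; rewrite -(eqr_nat rat) part1 big_nat1 fact0 /= (_ : 2`! = 2%N) //.
Qed.

Lemma part2r m : (dAD m.+2)%:R = (2 * m.+2)%N%:R * (dAD m.+1)%:R
   + (-1) ^+ m.+1 * ((m.+2 ^ 2)%N%:R - (2 * m.+2)%N%:R - 1) :> rat.
Proof.
case: m => [|m].
  rewrite dAD2 dAD1 /= expr1; ring.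
rewrite !part1 big_nat_recr //=.
set S := \sum_(0 <= k < m.+1) (2 ^ (m.+2 - k - 2))%:R * (-1) ^+ k / (k`!)%:R.
rewrite (_ : \sum_(0 <= k < m.+1) (2 ^ (m.+3 - k - 2))%:R * (-1) ^+ k / (k`!)%:R = 2 * S :> rat); last first.
  rewrite /S mulr_sumr; apply: eq_big_nat => k /andP[_ km].
  have -> : (m.+3 - k - 2 = (m.+2 - k - 2).+1)%N by lia.
  by rewrite expnS natrM; ring.
have -> : (m.+3 - m.+1 - 2 = 0)%N by lia.
have f0 : ((m.+1)`!)%:R != 0 :> rat by rewrite pnatr_eq0 -lt0n fact_gt0.
rewrite !factS !natrM expn0.
have fm : (m`!)%:R != 0 :> rat by rewrite pnatr_eq0 -lt0n fact_gt0.
have -> : (m.+3)%:R = (m%:R + 3 : rat) by rewrite -addn3 natrD.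
have -> : (m.+2)%:R = (m%:R + 2 : rat) by rewrite -addn2 natrD.
have -> : (m.+1)%:R = (m%:R + 1 : rat) by rewrite -addn1 natrD.
have m1 : (m%:R + 1 : rat) != 0 by rewrite natr1 pnatr_eq0.
rewrite !exprS; field; by rewrite fm m1.
Qed.

Lemma part3r m : (dAD m.+3)%:R = (2 * m.+3 - 1)%N%:R * (dAD m.+2)%:R
   + (2 * (m.+3 - 1))%N%:R * (dAD m.+1)%:R + (-1) ^+ m.+2 * (2 * m.+3 - 3)%N%:R :> rat.
Proof.
rewrite (part2r m.+1) (part2r m).
have -> : (2 * m.+3 - 1 = 2 * m + 5)%N by lia.
have -> : (2 * (m.+3 - 1) = 2 * m + 4)%N by lia.
have -> : (2 * m.+3 - 3 = 2 * m + 3)%N by lia.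
rewrite !natrD !natrM ?natrX.
have -> : (m.+3)%:R = (m%:R + 3 : rat) by rewrite -addn3 natrD.
have -> : (m.+2)%:R = (m%:R + 2 : rat) by rewrite -addn2 natrD.
rewrite !exprS; ring.
Qed.

Lemma toZ (a b : int) : (a%:~R : rat) = b%:~R -> a = b.
Proof. exact: intr_inj. Qed.


Theorem theorem1p3 :
  (forall n : nat, (2 <= n)%N ->
     (dAD n)%:R =
       (n`!)%:R * (\sum_(0 <= k < n.-1) (2 ^ (n - k - 2))%:R * (-1) ^+ k / (k`!)%:R)
       + (-1) ^+ n.-1 * (n.-1)%:R :> rat)
  /\ (dAD 1 = 0%N /\
      forall n : nat, (2 <= n)%N ->
        (dAD n)%:Z = (2 * n)%:Z * (dAD n.-1)%:Z
                     + (-1) ^+ n.-1 * ((n ^ 2)%:Z - (2 * n)%:Z - 1))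
  /\ (dAD 1 = 0%N /\ dAD 2 = 1%N /\
      forall n : nat, (3 <= n)%N ->
        (dAD n)%:Z = (2 * n - 1)%:Z * (dAD n.-1)%:Z
                     + (2 * (n - 1))%:Z * (dAD n.-2)%:Z
                     + (-1) ^+ n.-1 * (2 * n - 3)%:Z).
Proof.
split; first by case=> [|[|m]] // _; exact: part1.
split; first split; first exact: dAD1.
  case=> [|[|m]] // _; apply: toZ.
  rewrite !(rmorphD, rmorphM, rmorphB, rmorphXn, rmorphN1, rmorphN, rmorph1).
  exact: (part2r m).
split; first exact: dAD1.
split; first exact: dAD2.
move=> n n3; have [m ->] : exists m, n = m.+3 by exists (n - 3)%N; lia.
apply: toZ.
rewrite (_ : (-1) ^+ m.+3.-1 = ((-1) ^+ m.+2 : int)) //.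
set s := ((-1) ^+ m.+2 : int).
rewrite intrD intrD intrM intrM intrM.
rewrite /s rmorphXn rmorphN1.
exact: (part3r m).
Qed.
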